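(* Suppose $d_i-a_i<2t_i$ for every job $i$. Then for any set $S$ of jobs there is at most one order in which all jobs of $S$ can be executed nonpreemptively, each job $i$ processed without interruption during an interval $[s_i,s_i+t_i)$ with $a_i\le s_i\le d_i-t_i$, with the intervals pairwise disjoint. In particular, the ordering of the executed jobs in any nonpreemptive schedule is uniquely determined by the set of executed jobs.
   Context: Jobs $1,\dots,n$ have nonnegative integer processing times $t_i$, arrival times $a_i$ and deadlines $d_i$; they are executed on a single processor that processes one job at a time. *)

(* Defs.v *)
From mathcomp Require Import all_boot.
Set Implicit Arguments. Unset Strict Implicit. Unset Printing Implicit Defensive.

(* Jobs are indexed by 'I_n; t = processing times, a = arrival times,
   d = deadlines; times are natural numbers (discrete time). *)

Definition intervals_disjoint (s t s' t' : nat) : Prop :=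
  forall x : nat, ~ ((s <= x < s + t) /\ (s' <= x < s' + t')).

Definition feasible_schedule (n : nat) (t a d : 'I_n -> nat)
    (S : {set 'I_n}) (s : 'I_n -> nat) : Prop :=
  (forall i, i \in S -> a i <= s i /\ s i + t i <= d i) /\
  (forall i j, i \in S -> j \in S -> i != j ->
     intervals_disjoint (s i) (t i) (s j) (t j)).

(* Main.v *)
Require Import Defs.
From mathcomp Require Import all_boot.
From mathcomp Require Import zify.

Lemma key (n : nat) (t a d : 'I_n -> nat)
    (Hslack : forall i, d i < a i + 2 * t i)
    (S : {set 'I_n}) (s : 'I_n -> nat) :
  feasible_schedule t a d S s ->
  forall i j, i \in S -> j \in S -> i != j ->
    (s i < s j <-> d i - t i < d j - t j).
Proof.
move=> [Hb Hd] i j iS jS ij.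
have [ai di] := Hb i iS; have [aj dj] := Hb j jS.
have Si := Hslack i; have Sj := Hslack j.
have Dij := Hd i j iS jS ij.
have Dji : intervals_disjoint (s j) (t j) (s i) (t i).
  by apply: Hd => //; rewrite eq_sym.
have ti : 0 < t i by lia.
have tj : 0 < t j by lia.
split=> H.
- have : s i + t i <= s j.
    case: (leqP (s i + t i) (s j)) => // h.
    exfalso; apply: (Dij (s j)); lia.
  lia.
- case: (ltngtP (s i) (s j)) => // h.
  + have : s j + t j <= s i.
      case: (leqP (s j + t j) (s i)) => // h'.
      exfalso; apply: (Dji (s i)); lia.
    lia.
  + exfalso; apply: (Dij (s i)); lia.
Qed.

Theorem corollary1 (n : nat) (t a d : 'I_n -> nat)
    (Hslack : forall i, d i < a i + 2 * t i)
    (S : {set 'I_n}) (s1 s2 : 'I_n -> nat) :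
  feasible_schedule t a d S s1 ->
  feasible_schedule t a d S s2 ->
  forall i j, i \in S -> j \in S -> (s1 i < s1 j <-> s2 i < s2 j).
Proof.
move=> F1 F2 i j iS jS.
case: (eqVneq i j) => [->|ij]; first by rewrite !ltnn.
have K1 := @key n t a d Hslack S _ F1 i j iS jS ij; have K2 := @key n t a d Hslack S _ F2 i j iS jS ij; tauto.
Qed.
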